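(* Let $N$ be a positive integer. Let $\pi: A\to B$ be a surjective map between nonempty finite sets and let $\mathfrak s$ be a section of $\pi$. Let $\mu$ and $\rho$ be two probability measures on $\{0,1,\dots,N\}^A$. Assume that $\mu$ is a $\pi$-lift and that the following two conditions hold: (A) Let $Z$ be a $\rho$-distributed random variable. For every $b\in B$, let $W_b:=(Z_c : c\in A,\ \pi(c)\neq b)$. For every $b\in B$, every $a\in\pi^{-1}(\{b\})$ and every event $H\in \sigma(W_b)$ of positive probability, the conditional distribution of $Z_{\mathfrak s(b)}$ given $H$ is stochastically dominated by the conditional distribution of $Z_a$ given $H$. (B) Let $Y$ be a $\mu$-distributed random variable, let $X_b:=\max_{a\in \pi^{-1}(\{b\})}Y_a$ for $b\in B$, and let $Y'_a:=X_{\pi(a)}\,\mathbf{1}_{\mathfrak s(\pi(a))=a}$ for $a\in A$. Then the distribution of $Y'$ is stochastically dominated by $\rho$. Then $\mu$ is stochastically dominated by $\rho$.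
   Context: $\{0,1,\dots,N\}^A$ carries the product order. A section of $\pi$ is a map $s:B\to A$ with $\pi\circ s=\mathrm{id}_B$. A probability measure $\mu$ on $\{0,\dots,N\}^A$ is a $\pi$-lift if for $\mu$-almost every $x$, for every $b\in B$, at most one $a\in\pi^{-1}(\{b\})$ satisfies $x_a\neq0$. Stochastic domination of $\mu$ by $\nu$ means there exist $X\sim\mu$, $Y\sim\nu$ on a common probability space with $X\le Y$ almost surely. *)

(* Defs.v *)
From HB Require Import structures.
From mathcomp Require Import all_boot all_order all_algebra.
From mathcomp Require Import reals.
Set Implicit Arguments. Unset Strict Implicit. Unset Printing Implicit Defensive.
Import Order.TTheory GRing.Theory Num.Theory.
Local Open Scope ring_scope.

Definition is_prob {R : realType} {T : finType} (p : {ffun T -> R}) : Prop :=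
  (forall x, 0 <= p x) /\ \sum_(x : T) p x = 1.

(* Stochastic domination of mu by nu w.r.t. an order le on a finite type:
   existence of a coupling (a joint law of (X,Y), i.e. X ~ mu, Y ~ nu on a
   common probability space) supported on {le X Y}. *)
Definition stoch_dom {R : realType} {T : finType} (le : rel T)
    (mu nu : {ffun T -> R}) : Prop :=
  exists q : {ffun T * T -> R},
    [/\ forall z, 0 <= q z,
        forall x, \sum_(y : T) q (x, y) = mu x,
        forall y, \sum_(x : T) q (x, y) = nu y &
        forall x y, 0 < q (x, y) -> le x y].

Definition config (N : nat) (A : finType) := {ffun A -> 'I_N.+1}.
Definition le_ord (N : nat) : rel 'I_N.+1 := fun i j => (i <= j)%N.
Definition le_config (N : nat) (A : finType) : rel (config N A) :=
  fun x y => [forall a, (x a <= y a)%N].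

Definition prob_of {R : realType} {T : finType} (p : {ffun T -> R})
  (H : {pred T}) : R := \sum_(x | x \in H) p x.

Definition pushforward {R : realType} {T U : finType} (p : {ffun T -> R})
  (f : T -> U) : {ffun U -> R} := [ffun u => \sum_(x | f x == u) p x].

Definition cond_law {R : realType} {T U : finType} (p : {ffun T -> R})
  (H : {pred T}) (f : T -> U) : {ffun U -> R} :=
  [ffun u => (\sum_(x | (x \in H) && (f x == u)) p x) / prob_of p H].

(* H belongs to sigma(W_b), W_b = (Z_c : pi c != b): membership in H only
   depends on the coordinates outside pi^{-1}(b). *)
Definition measurable_outside (N : nat) (A B : finType) (pi : A -> B) (b : B)
  (H : {pred config N A}) : Prop :=
  forall x y : config N A, (forall c, pi c != b -> x c = y c) ->
    (x \in H) = (y \in H).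

Definition is_pi_lift {R : realType} (N : nat) (A B : finType) (pi : A -> B)
  (mu : {ffun config N A -> R}) : Prop :=
  forall x : config N A, 0 < mu x ->
    forall a a' : A, pi a = pi a' -> x a != ord0 -> x a' != ord0 -> a = a'.

Definition block_max (N : nat) (A B : finType) (pi : A -> B)
  (y : config N A) (b : B) : 'I_N.+1 :=
  inord (\max_(a | pi a == b) (y a : nat)).

Definition compress (N : nat) (A B : finType) (pi : A -> B) (s : B -> A)
  (y : config N A) : config N A :=
  [ffun a => if s (pi a) == a then block_max pi y (pi a) else ord0].

(* Main.v *)
Require Import Defs.
From HB Require Import structures.
From mathcomp Require Import all_boot all_order all_algebra.
From mathcomp Require Import reals.
From mathcomp Require Import zify.
Set Implicit Arguments. Unset Strict Implicit. Unset Printing Implicit Defensive.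
Import Order.TTheory GRing.Theory Num.Theory.
Local Open Scope ring_scope.

Section Hall.
Variables (R : realType) (T : finType) (r : rel T).

Lemma sum_le_sub (P Q : pred T) (f : T -> R) :
  (forall x, 0 <= f x) -> (forall x, P x -> 0 < f x -> Q x) ->
  \sum_(x | P x) f x <= \sum_(x | Q x) f x.
Proof.
move=> f0 PQ; rewrite [X in X <= _]big_mkcond [X in _ <= X]big_mkcond.
apply: ler_sum => x _; case Px: (P x); last by case: (Q x).
case Qx: (Q x) => //; rewrite leNgt; apply/negP => fx.
by move: (PQ x Px fx); rewrite Qx.
Qed.

Lemma sum_delta (S : {set T}) x0 (e : R) :
  \sum_(x in S) ((x == x0)%:R * e) = (x0 \in S)%:R * e.
Proof.
case x0S: (x0 \in S).
  rewrite (bigD1 x0) //= eqxx mul1r big1 ?addr0 // => x /andP[_ /negbTE ->].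
  by rewrite mul0r.
rewrite mul0r big1 // => x xS; case: eqP xS => [->|_ _]; first by rewrite x0S.
by rewrite mul0r.
Qed.

Lemma sum_delta_all x0 (e : R) : \sum_(x : T) ((x == x0)%:R * e) = e.
Proof.
rewrite (bigD1 x0) //= eqxx mul1r big1 ?addr0 // => x /negbTE ->.
by rewrite mul0r.
Qed.

Definition nbh (S : {set T}) : {set T} := [set y | [exists x in S, r x y]].
Definition hallC (mu nu : {ffun T -> R}) :=
  forall S : {set T}, \sum_(x in S) mu x <= \sum_(y in nbh S) nu y.
Definition supp (f : {ffun T -> R}) : {set T} := [set x | f x != 0].
Definition msr (mu nu : {ffun T -> R}) := (#|supp mu| + #|supp nu|)%N.
Definition red (mu : {ffun T -> R}) x0 e : {ffun T -> R} :=
  [ffun x => mu x - (x == x0)%:R * e].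

Lemma sum_red (S : {set T}) mu x0 e :
  \sum_(x in S) red mu x0 e x = \sum_(x in S) mu x - (x0 \in S)%:R * e.
Proof.
rewrite -sum_delta -sumrB; apply: eq_bigr => x _; by rewrite ffunE.
Qed.

Lemma sum_red_all mu x0 e : \sum_(x : T) red mu x0 e x = \sum_(x : T) mu x - e.
Proof.
rewrite -[X in _ - X](sum_delta_all x0) -sumrB; apply: eq_bigr => x _.
by rewrite ffunE.
Qed.

Lemma zero_dom (mu nu : {ffun T -> R}) :
  (forall x, mu x = 0) -> (forall y, 0 <= nu y) -> \sum_(x : T) mu x = \sum_(x : T) nu x ->
  stoch_dom r mu nu.
Proof.
move=> mu0 nu0 tot.
have nuz : forall y, nu y = 0.
  have: \sum_(x : T) nu x = 0 by rewrite -tot big1.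
  by move/(psumr_eq0P (fun i _ => nu0 i)) => H y; apply: H.
exists [ffun => 0]; split.
- by move=> z; rewrite ffunE.
- by move=> x; rewrite mu0 big1 // => y _; rewrite ffunE.
- by move=> y; rewrite nuz big1 // => x _; rewrite ffunE.
- by move=> x y; rewrite ffunE ltxx.
Qed.

Lemma red_dom (mu nu : {ffun T -> R}) x0 y0 e :
  r x0 y0 -> 0 <= e ->
  stoch_dom r (red mu x0 e) (red nu y0 e) -> stoch_dom r mu nu.
Proof.
move=> rxy e0 [q [q0 qr qc qs]].
exists [ffun z => q z + (z == (x0, y0))%:R * e]; split.
- move=> z; rewrite ffunE addr_ge0 // mulr_ge0 //; exact: ler0n.
- move=> x; under eq_bigr do rewrite ffunE.
  rewrite big_split /= qr ffunE.
  suff ->: \sum_(y : T) (((x, y) == (x0, y0))%:R * e) = (x == x0)%:R * e.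
    by rewrite subrK.
  case: (eqVneq x x0) => [->|xx0].
    rewrite (_ : true%:R * e = e); last by rewrite mul1r.
    rewrite -[RHS](sum_delta_all y0 e).
    by apply: eq_bigr => y _; rewrite xpair_eqE eqxx.
  rewrite mul0r big1 // => y _; by rewrite xpair_eqE (negbTE xx0) mul0r.
- move=> y; under eq_bigr do rewrite ffunE.
  rewrite big_split /= qc ffunE.
  suff ->: \sum_(x : T) (((x, y) == (x0, y0))%:R * e) = (y == y0)%:R * e.
    by rewrite subrK.
  case: (eqVneq y y0) => [->|yy0].
    rewrite (_ : true%:R * e = e); last by rewrite mul1r.
    rewrite -[RHS](sum_delta_all x0 e).
    by apply: eq_bigr => x _; rewrite xpair_eqE eqxx andbT.
  rewrite mul0r big1 // => x _; by rewrite xpair_eqE (negbTE yy0) andbF mul0r.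
- move=> x y; rewrite ffunE => pos.
  case: (eqVneq (x, y) (x0, y0)) => [[-> ->] //|ne].
  apply: qs; move: pos; by rewrite (negbTE ne) mul0r addr0.
Qed.

Lemma red_hall (mu nu : {ffun T -> R}) x0 y0 e :
  r x0 y0 -> hallC mu nu ->
  (forall S : {set T}, x0 \notin S -> y0 \in nbh S ->
     \sum_(x in S) mu x + e <= \sum_(y in nbh S) nu y) ->
  hallC (red mu x0 e) (red nu y0 e).
Proof.
move=> rxy H He S; rewrite !sum_red.
case x0S: (x0 \in S).
  have ->: y0 \in nbh S by rewrite inE; apply/existsP; exists x0; rewrite x0S.
  by rewrite lerD2r.
case yN: (y0 \in nbh S).
  rewrite mul0r subr0 (_ : true%:R * e = e); last by rewrite mul1r.
  by rewrite lerBrDr; apply: He => //; rewrite x0S.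
rewrite !mul0r !subr0; exact: H.
Qed.

Lemma sum_in_cond (A S : {set T}) (f : T -> R) :
  \sum_(x in A) (if x \in S then f x else 0) = \sum_(x in A :&: S) f x.
Proof.
rewrite big_mkcond [RHS]big_mkcond; apply: eq_bigr => x _; rewrite inE.
by case: (x \in A); case: (x \in S).
Qed.

Lemma sum_out_cond (A S : {set T}) (f : T -> R) :
  \sum_(x in A) (if x \in S then 0 else f x) = \sum_(x in A :\: S) f x.
Proof.
rewrite big_mkcond [RHS]big_mkcond; apply: eq_bigr => x _; rewrite inE.
by case: (x \in A); case: (x \in S).
Qed.

Lemma sum_U_split (A B : {set T}) (f : T -> R) :
  \sum_(x in A :|: B) f x = \sum_(x in A :\: B) f x + \sum_(x in B) f x.
Proof.
rewrite big_mkcond [X in _ = X + _]big_mkcond [X in _ = _ + X]big_mkcond.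
rewrite -big_split; apply: eq_bigr => x _; rewrite !inE.
by case: (x \in A); case: (x \in B); rewrite /= ?addr0 ?add0r.
Qed.

Lemma sum_all_split (S : {set T}) (f : T -> R) :
  \sum_(x : T) f x = \sum_(x in S) f x + \sum_(x : T) (if x \in S then 0 else f x).
Proof.
rewrite [X in _ = X + _]big_mkcond -big_split; apply: eq_bigr => x _.
by case: (x \in S); rewrite /= ?addr0 ?add0r.
Qed.

Lemma sum_subset_le (A B : {set T}) (f : T -> R) :
  (forall x, 0 <= f x) -> A \subset B -> \sum_(x in A) f x <= \sum_(x in B) f x.
Proof.
move=> f0 /subsetP AB; apply: sum_le_sub => // x xA _; exact: AB.
Qed.

Lemma nbh_mono (A B : {set T}) : A \subset B -> nbh A \subset nbh B.
Proof.
move=> /subsetP AB; apply/subsetP => y; rewrite !inE => /existsP[x /andP[xA rxy]].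
by apply/existsP; exists x; rewrite AB.
Qed.

Lemma nbhU (A B : {set T}) : nbh (A :|: B) = nbh A :|: nbh B.
Proof.
apply/setP => y; rewrite !inE; apply/existsP/orP.
  move=> [x /andP[]]; rewrite inE => /orP[xA|xB] rxy.
    by left; apply/existsP; exists x; rewrite xA.
  by right; apply/existsP; exists x; rewrite xB.
move=> [/existsP[x /andP[xA rxy]]|/existsP[x /andP[xB rxy]]]; exists x;
  by rewrite inE ?xA ?xB ?orbT.
Qed.

Definition cin (S : {set T}) (f : {ffun T -> R}) : {ffun T -> R} :=
  [ffun x => if x \in S then f x else 0].
Definition cout (S : {set T}) (f : {ffun T -> R}) : {ffun T -> R} :=
  [ffun x => if x \in S then 0 else f x].

Lemma split_dom (S S2 : {set T}) (mu nu : {ffun T -> R}) :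
  stoch_dom r (cin S mu) (cin S2 nu) -> stoch_dom r (cout S mu) (cout S2 nu) ->
  stoch_dom r mu nu.
Proof.
move=> [q1 [q10 q1r q1c q1s]] [q2 [q20 q2r q2c q2s]].
exists [ffun z => q1 z + q2 z]; split.
- by move=> z; rewrite ffunE addr_ge0.
- move=> x; under eq_bigr do rewrite ffunE.
  by rewrite big_split /= q1r q2r !ffunE; case: (x \in S); rewrite ?addr0 ?add0r.
- move=> y; under eq_bigr do rewrite ffunE.
  by rewrite big_split /= q1c q2c !ffunE; case: (y \in S2); rewrite ?addr0 ?add0r.
- move=> x y; rewrite ffunE => pos.
  case: (ltP 0 (q1 (x, y))) => [/q1s //|le1]; apply: q2s.
  rewrite ltNge; apply/negP => le2; move: pos; rewrite ltNge.
  by rewrite (le_trans (lerD le1 le2)) ?addr0.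
Qed.

Lemma split_hyp (S : {set T}) (mu nu : {ffun T -> R}) :
  (forall x, 0 <= mu x) -> (forall y, 0 <= nu y) ->
  \sum_(x : T) mu x = \sum_(x : T) nu x -> hallC mu nu ->
  \sum_(x in S) mu x = \sum_(y in nbh S) nu y ->
  [/\ \sum_(x : T) cin S mu x = \sum_(x : T) cin (nbh S) nu x,
      hallC (cin S mu) (cin (nbh S) nu),
      \sum_(x : T) cout S mu x = \sum_(x : T) cout (nbh S) nu x &
      hallC (cout S mu) (cout (nbh S) nu)].
Proof.
move=> mu0 nu0 tot H tight; split.
- rewrite /cin; under eq_bigr do rewrite ffunE.
  rewrite -big_mkcond /= tight; under [RHS]eq_bigr do rewrite ffunE.
  by rewrite -big_mkcond.
- move=> S'; rewrite /cin; under eq_bigr do rewrite ffunE.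
  under [X in _ <= X]eq_bigr do rewrite ffunE.
  rewrite !sum_in_cond; apply: (le_trans (H _)).
  apply: sum_subset_le => //; rewrite subsetI.
  by rewrite !nbh_mono ?subsetIl ?subsetIr.
- rewrite /cout; under eq_bigr do rewrite ffunE.
  under [RHS]eq_bigr do rewrite ffunE.
  apply: (@addrI _ (\sum_(x in S) mu x)).
  rewrite -sum_all_split [in RHS]tight -sum_all_split; exact: tot.
- move=> S'; rewrite /cout; under eq_bigr do rewrite ffunE.
  under [X in _ <= X]eq_bigr do rewrite ffunE.
  rewrite !sum_out_cond.
  have e1 := sum_U_split S' S mu.
  have e2 := sum_U_split (nbh (S' :|: S)) (nbh S) nu.
  have sub: nbh S \subset nbh (S' :|: S) by apply: nbh_mono; apply: subsetUr.
  rewrite (setUidPl sub) in e2.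
  apply: (@le_trans _ _ (\sum_(x in nbh (S' :|: S) :\: nbh S) nu x)).
    rewrite -(lerD2r (\sum_(x in S) mu x)) -e1 tight -e2; exact: H.
  apply: sum_subset_le => //; rewrite nbhU; apply/subsetP => y.
  rewrite !in_setD in_setU => /andP[nS /orP[yS'|yS]].
    by rewrite nS yS'.
  by rewrite yS in nS.

Qed.

Lemma msr_lt (mu nu mu1 nu1 : {ffun T -> R}) :
  supp mu1 \subset supp mu -> supp nu1 \subset supp nu ->
  (supp mu1 \proper supp mu) || (supp nu1 \proper supp nu) ->
  (msr mu1 nu1 < msr mu nu)%N.
Proof.
move=> s1 s2 /orP[p|p]; have := subset_leq_card s1; have := subset_leq_card s2;
  have := proper_card p; rewrite /msr; lia.
Qed.

Lemma supp_red (mu : {ffun T -> R}) x0 e :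
  mu x0 != 0 -> supp (red mu x0 e) \subset supp mu.
Proof.
move=> m0; apply/subsetP => x; rewrite !inE ffunE.
case: (eqVneq x x0) => [->//|_]; by rewrite mul0r subr0.
Qed.

Lemma supp_cin S (f : {ffun T -> R}) : supp (cin S f) \subset supp f.
Proof. apply/subsetP => x; rewrite !inE ffunE; by case: (x \in S); rewrite ?eqxx. Qed.

Lemma supp_cout S (f : {ffun T -> R}) : supp (cout S f) \subset supp f.
Proof. apply/subsetP => x; rewrite !inE ffunE; by case: (x \in S); rewrite ?eqxx. Qed.

Lemma hall_ind n : forall mu nu : {ffun T -> R}, (msr mu nu < n)%N ->
  (forall x, 0 <= mu x) -> (forall y, 0 <= nu y) ->
  \sum_(x : T) mu x = \sum_(x : T) nu x -> hallC mu nu -> stoch_dom r mu nu.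
Proof.
elim: n => // n IH mu nu lt mu0 nu0 tot H.
case: (pickP (fun x => mu x != 0)) => [x0 mx0 | mz]; last first.
  by apply: zero_dom => // x; apply/eqP; apply/negbFE; exact: mz.
have mx0p : 0 < mu x0 by rewrite lt_def mx0 mu0.
case: (pickP (fun y => r x0 y && (0 < nu y))) => [y0 /andP[rxy ny0] | nz];
  last first.
  exfalso; have := H [set x0]; rewrite big_set1.
  rewrite big1 => [|y]; first by rewrite leNgt mx0p.
  rewrite inE => /existsP[x /andP[]]; rewrite inE => /eqP -> rx0y.
  have := nz y; rewrite rx0y /= => /negbT; rewrite -leNgt => le0.
  by apply/le_anti; rewrite le0 nu0.
have ny0' : nu y0 != 0 by rewrite gt_eqF.
pose m0 := if mu x0 <= nu y0 then mu x0 else nu y0.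
have m0mu : m0 <= mu x0 by rewrite /m0; case: ifP => // /negbT; rewrite -ltNge => /ltW.
have m0nu : m0 <= nu y0 by rewrite /m0; case: ifP.
have m0p : 0 < m0 by rewrite /m0; case: ifP.
have lemsr : (msr mu nu <= n)%N by [].
have y0N : forall S : {set T}, x0 \in S -> y0 \in nbh S.
  by move=> S xS; rewrite inE; apply/existsP; exists x0; rewrite xS.
pose g := fun S : {set T} => \sum_(y in nbh S) nu y - \sum_(x in S) mu x.
pose P := fun S : {set T} => (x0 \notin S) && (y0 \in nbh S) && (g S < m0).
have redok : forall e, 0 <= e -> e <= m0 ->
    (forall S : {set T}, x0 \notin S -> y0 \in nbh S -> e <= g S) ->
    [/\ forall x, 0 <= red mu x0 e x, forall y, 0 <= red nu y0 e y,
        \sum_(x : T) red mu x0 e x = \sum_(x : T) red nu y0 e x &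
        hallC (red mu x0 e) (red nu y0 e)].
  move=> e e0 em eg; split.
  - move=> x; rewrite ffunE; case: (eqVneq x x0) => [->|_].
      by rewrite mul1r subr_ge0 (le_trans em).
    by rewrite mul0r subr0.
  - move=> x; rewrite ffunE; case: (eqVneq x y0) => [->|_].
      by rewrite mul1r subr_ge0 (le_trans em).
    by rewrite mul0r subr0.
  - by rewrite !sum_red_all tot.
  - apply: red_hall => // S xS yS; rewrite addrC -lerBrDr; exact: eg.
case: (pickP P) => [S0 PS0 | nP]; last first.
  have side : forall S : {set T}, x0 \notin S -> y0 \in nbh S -> m0 <= g S.
    move=> S xS yS; rewrite leNgt; apply/negP => gS.
    by have := nP S; rewrite /P xS yS gS.
  have [r0 r1 r2 r3] := redok m0 (ltW m0p) (lexx _) side.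
  apply: (red_dom (x0 := x0) (y0 := y0) (e := m0)) => //; first exact: ltW.
  apply: IH => //; apply: (leq_trans _ lemsr); apply: msr_lt.
  - exact: supp_red.
  - exact: supp_red.
  - rewrite /m0; case: ifP => _.
      apply/orP; left; apply/properP; split; first exact: supp_red.
      by exists x0; rewrite !inE ?ffunE ?eqxx ?mul1r ?subrr ?eqxx.
    apply/orP; right; apply/properP; split; first exact: supp_red.
    by exists y0; rewrite !inE ?ffunE ?eqxx ?mul1r ?subrr ?eqxx.
have [S PS Smin] : exists2 S, P S & forall S', P S' -> g S <= g S'.
  have rf : reflexive (T := R) <=%R by move=> a; exact: lexx.
  have tr : transitive (T := R) <=%R by move=> a b c; apply: le_trans.
  have tt : total (T := R) <=%R by move=> a b; apply: le_total.
  case: (@extremumP _ _ <=%R S0 P g rf tr tt PS0).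
  by move=> S PS Smin; exists S.
move: (PS); rewrite /P => /andP[/andP[xS yS] gm].
pose e := g S.
have e0 : 0 <= e by rewrite /e /g subr_ge0; exact: H.
have side : forall S' : {set T}, x0 \notin S' -> y0 \in nbh S' -> e <= g S'.
  move=> S' xS' yS'; case PS': (P S'); first exact: Smin.
  move: PS'; rewrite /P xS' yS' /= => /negbT; rewrite -leNgt => gS'.
  exact: le_trans (ltW gm) gS'.
have [r0 r1 r2 r3] := redok e e0 (ltW gm) side.
apply: (red_dom (x0 := x0) (y0 := y0) (e := e)) => //.
set mu' := red mu x0 e; set nu' := red nu y0 e.
have tight : \sum_(x in S) mu' x = \sum_(y in nbh S) nu' y.
  rewrite !sum_red (negbTE xS) yS mul0r subr0.
  rewrite (_ : true%:R * e = e); last by rewrite mul1r.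
  by rewrite /e /g opprB addrC subrK.
have [t1 h1 t2 h2] := split_hyp r0 r1 r2 r3 tight.
have smu : supp mu' \subset supp mu by exact: supp_red.
have snu : supp nu' \subset supp nu by exact: supp_red.
apply: (split_dom (S := S) (S2 := nbh S)).
- apply: IH => //; last first.
  + by move=> y; rewrite ffunE; case: ifP.
  + by move=> x; rewrite ffunE; case: ifP.
  apply: (leq_trans _ lemsr); apply: msr_lt.
  + exact: subset_trans (supp_cin _ _) smu.
  + exact: subset_trans (supp_cin _ _) snu.
  + apply/orP; left; apply/properP; split; first exact: subset_trans (supp_cin _ _) smu.
    by exists x0; rewrite !inE ?ffunE ?(negbTE xS) ?eqxx.
- apply: IH => //; last first.
  + by move=> y; rewrite ffunE; case: ifP.
  + by move=> x; rewrite ffunE; case: ifP.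
  apply: (leq_trans _ lemsr); apply: msr_lt.
  + exact: subset_trans (supp_cout _ _) smu.
  + exact: subset_trans (supp_cout _ _) snu.
  + apply/orP; right; apply/properP; split; first exact: subset_trans (supp_cout _ _) snu.
    by exists y0; rewrite !inE ?ffunE ?yS ?eqxx.
Qed.

Lemma hall_thm (mu nu : {ffun T -> R}) :
  (forall x, 0 <= mu x) -> (forall y, 0 <= nu y) ->
  \sum_(x : T) mu x = \sum_(x : T) nu x -> hallC mu nu -> stoch_dom r mu nu.
Proof. exact: (@hall_ind (msr mu nu).+1). Qed.

End Hall.

Lemma dom_upset (R : realType) (T : finType) (le : rel T) (mu nu : {ffun T -> R})
  (U : {set T}) : stoch_dom le mu nu ->
  (forall x y, le x y -> x \in U -> y \in U) ->
  \sum_(x in U) mu x <= \sum_(x in U) nu x.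
Proof.
move=> [q [q0 qr qc qs]] up.
have e1: forall x, x \in U -> mu x = \sum_(y in U) q (x, y).
  move=> x xU; rewrite -qr [RHS]big_mkcond; apply: eq_bigr => y _.
  case yU: (y \in U) => //.
  apply/le_anti; rewrite q0 andbT leNgt; apply/negP => /qs lxy.
  by rewrite (up _ _ lxy xU) in yU.
rewrite (eq_bigr _ e1).
under [X in _ <= X]eq_bigr do rewrite -qc.
rewrite [X in _ <= X]exchange_big /=.
apply: sum_le_sub => // x; exact: sumr_ge0.
Qed.

Lemma cond_sum (R : realType) (T U : finType) (p : {ffun T -> R}) (H : {pred T})
  (f : T -> U) (V : {set U}) :
  \sum_(u in V) cond_law p H f u =
  (\sum_(x | (x \in H) && (f x \in V)) p x) / prob_of p H.
Proof.
under eq_bigr do rewrite ffunE.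
rewrite -mulr_suml; congr (_ * _).
rewrite [RHS](partition_big f (fun u => u \in V)) /=; last by move=> x /andP[].
apply: eq_bigr => u uV; apply: eq_bigl => x.
by case: (eqVneq (f x) u) => [->|]; rewrite ?uV ?andbT ?andbF.
Qed.

Lemma push_sum (R : realType) (T U : finType) (p : {ffun T -> R})
  (f : T -> U) (V : {set U}) :
  \sum_(u in V) pushforward p f u = \sum_(x | f x \in V) p x.
Proof.
under eq_bigr do rewrite ffunE.
rewrite [RHS](partition_big f (fun u => u \in V)) //=.
apply: eq_bigr => u uV; apply: eq_bigl => x.
by case: (eqVneq (f x) u) => [->|]; rewrite ?uV ?andbT ?andbF.
Qed.

Section Main.
Variables (R : realType) (N : nat) (A B : finType) (pi : A -> B) (s : B -> A).
Hypothesis spi : forall b, pi (s b) = b.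

Local Notation cfgT := (config N A).

Definition upset_c (U : {set cfgT}) :=
  forall x y, le_config x y -> x \in U -> y \in U.

Definition compT (T : {set B}) (y : cfgT) : cfgT :=
  [ffun a => if pi a \in T then
     (if s (pi a) == a then block_max pi y (pi a) else ord0) else y a].

Definition cfg b a (t : 'I_N.+1) (w : cfgT) : cfgT :=
  [ffun c => if pi c == b then (if c == a then t else ord0) else w c].

Definition ustar b (U : {set cfgT}) : {set cfgT} :=
  [set x : cfgT | [exists a, (pi a == b) && (cfg b a (x (s b)) x \in U)]].

Definition Wb b (z : cfgT) : cfgT := [ffun c => if pi c == b then ord0 else z c].

Lemma le_config_refl (x : cfgT) : le_config x x.
Proof. by apply/forallP. Qed.

Lemma le_config_trans (x y z : cfgT) : le_config x y -> le_config y z -> le_config x z.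
Proof.
move=> /forallP h1 /forallP h2; apply/forallP => a; exact: leq_trans (h1 a) (h2 a).
Qed.

Lemma ustar_up b (U : {set cfgT}) : upset_c U -> upset_c (ustar b U).
Proof.
move=> up x y lxy; rewrite !inE => /existsP[a /andP[pa cU]].
apply/existsP; exists a; rewrite pa /=; apply: up cU.
move/forallP: lxy => lxy.
apply/forallP => c; rewrite !ffunE.
by case: (pi c == b); [case: (c == a) => // | ].
Qed.

Lemma ord_ne0 (i : 'I_N.+1) : (i != ord0) = (0 < i)%N.
Proof. by rewrite lt0n; congr negb; apply/eqP/eqP => [->|h] //; apply: val_inj. Qed.

Lemma step_pw (y : cfgT) (T : {set B}) b (U : {set cfgT}) :
  (forall a a', pi a = pi a' -> y a != ord0 -> y a' != ord0 -> a = a') ->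
  b \notin T -> compT T y \in U -> compT (b |: T) y \in ustar b U.
Proof.
move=> lift bT yU; rewrite inE; apply/existsP.
have psb : pi (s b) == b by rewrite spi.
have [a pa amax] : exists2 a, pi a == b & forall c, pi c == b -> (y c <= y a)%N.
  by case: (@arg_maxnP A (s b) (fun c => pi c == b) (fun c => nat_of_ord (y c)) psb) => a pa amax; exists a.
have mx : block_max pi y b = y a.
  rewrite /block_max (_ : \max_(c | pi c == b) (y c : nat) = y a) ?inord_val //.
  apply/eqP; rewrite eqn_leq; apply/andP; split.
    by apply/bigmax_leqP => c pc; exact: amax.
  exact: (@leq_bigmax_cond A (fun c => pi c == b) (fun c => nat_of_ord (y c)) a pa).
exists a; rewrite pa /=.
suff ->: cfg b a (compT (b |: T) y (s b)) (compT (b |: T) y) = compT T y by [].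
have hs : compT (b |: T) y (s b) = y a.
  by rewrite ffunE spi setU11 eqxx mx.
apply/ffunP => c; rewrite hs !ffunE.
case: (eqVneq (pi c) b) => [pcb|pcb].
  rewrite pcb (negbTE bT).
  case: (eqVneq c a) => [->//|cna].
  apply/eqP; rewrite eq_sym; apply/negP => /negP yc.
  have ya : y a != ord0.
    by rewrite ord_ne0; move: yc; rewrite ord_ne0 => yc; exact: leq_trans yc (amax c (introT eqP pcb)).
  by move: cna; rewrite (lift c a _ yc ya) ?eqxx // pcb (eqP pa).
by rewrite in_setU1 (negbTE pcb).
Qed.

Lemma rho_step (rho : {ffun cfgT -> R}) b (U : {set cfgT}) :
  (forall z, 0 <= rho z) ->
  (forall (a : A) (H : {pred cfgT}),
      pi a = b -> measurable_outside pi b H -> 0 < prob_of rho H ->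
      stoch_dom (@le_ord N)
        (cond_law rho H (fun z : cfgT => z (s b)))
        (cond_law rho H (fun z : cfgT => z a))) ->
  upset_c U ->
  \sum_(x in ustar b U) rho x <= \sum_(x in U) rho x.
Proof.
move=> rho0 hA up.
rewrite (partition_big (Wb b) xpredT) // [X in _ <= X](partition_big (Wb b) xpredT) //.
apply: ler_sum => w _.
pose H := [pred z : cfgT | Wb b z == w].
have mH : measurable_outside pi b H.
  move=> x y eq; rewrite !inE; suff ->: Wb b x = Wb b y by [].
  apply/ffunP => c; rewrite !ffunE; case: ifP => // /negbT; exact: eq.
have cfgW : forall a t x, cfg b a t x = cfg b a t (Wb b x).
  by move=> a t x; apply/ffunP => c; rewrite !ffunE; case: ifP.
case: (pickP (fun t : 'I_N.+1 => [exists a, (pi a == b) && (cfg b a t w \in U)]))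
  => [t0 Pt0 | nt]; last first.
  rewrite big1 ?sumr_ge0 // => x /andP[]; rewrite inE => /existsP[a /andP[pa cU]] /eqP wx.
  exfalso; move: (nt (x (s b))) => /negbT/negP; apply; apply/existsP; exists a.
  by rewrite pa -wx -cfgW.
case: (@arg_minnP _ t0 (fun t : 'I_N.+1 => [exists a, (pi a == b) && (cfg b a t w \in U)]) (fun t : 'I_N.+1 => nat_of_ord t) Pt0) => ts /existsP[as_ /andP[pa cU]] tmin.
apply: (@le_trans _ _ (\sum_(x | (x \in H) && (ts <= x (s b))%N) rho x)).
  apply: sum_le_sub => // x /andP[]; rewrite inE => /existsP[a /andP[pa' cU']] wx _.
  rewrite inE wx /=; apply: tmin; apply/existsP; exists a.
  by rewrite pa' -(eqP wx) -cfgW.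
apply: (@le_trans _ _ (\sum_(x | (x \in H) && (ts <= x as_)%N) rho x)); last first.
  apply: sum_le_sub => // x /andP[xH tx] _.
  move: xH; rewrite inE => /eqP wx; rewrite wx eqxx andbT.
  apply: up cU; apply/forallP => c; rewrite !ffunE -wx ffunE.
  case: (pi c == b) => //; case: (eqVneq c as_) => [->//|_]; exact: leq0n.
case: (eqVneq (prob_of rho H) 0) => [p0|pn0].
  have z : forall x, x \in H -> rho x = 0.
    by move=> x xH; apply: (psumr_eq0P (fun i _ => rho0 i) p0).
  rewrite big1 ?sumr_ge0 // => x /andP[xH _]; exact: z.
have pp : 0 < prob_of rho H by rewrite lt_def pn0 sumr_ge0.
have D := hA as_ H (eqP pa) mH pp.
have := dom_upset (U := [set i : 'I_N.+1 | (ts <= i)%N]) D.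
rewrite !cond_sum ler_pM2r ?invr_gt0 //.
have e : forall f : cfgT -> 'I_N.+1,
  \sum_(x | (x \in H) && (f x \in [set i : 'I_N.+1 | (ts <= i)%N])) rho x =
  \sum_(x | (x \in H) && (ts <= f x)%N) rho x.
  by move=> f; apply: eq_bigl => x; rewrite !inE.
rewrite !e; apply.
by move=> i j; rewrite !inE /le_ord => ij ti; exact: leq_trans ti ij.
Qed.

Lemma compT_setT (y : cfgT) : compT setT y = compress pi s y.
Proof. by apply/ffunP => a; rewrite !ffunE in_setT. Qed.

Lemma compT_set0 (y : cfgT) : compT set0 y = y.
Proof. by apply/ffunP => a; rewrite !ffunE in_set0. Qed.

Lemma chain (mu rho : {ffun cfgT -> R}) :
  (forall x, 0 <= mu x) -> (forall x, 0 <= rho x) ->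
  is_pi_lift pi mu ->
  (forall (b : B) (a : A) (H : {pred cfgT}),
      pi a = b -> measurable_outside pi b H -> 0 < prob_of rho H ->
      stoch_dom (@le_ord N)
        (cond_law rho H (fun z : cfgT => z (s b)))
        (cond_law rho H (fun z : cfgT => z a))) ->
  stoch_dom (@le_config N A) (pushforward mu (compress pi s)) rho ->
  forall n (T : {set B}), (#|~: T| <= n)%N -> forall U, upset_c U ->
  \sum_(x | compT T x \in U) mu x <= \sum_(x in U) rho x.
Proof.
move=> mu0 rho0 lift hA hB; elim=> [|n IH] T cT U up.
  have T1 : T = setT.
    rewrite -[T]setCK (cards0_eq (A := ~: T)) ?setC0 //.
    by apply/eqP; rewrite -leqn0.
  rewrite T1; under eq_bigl do rewrite compT_setT.
  rewrite -push_sum; apply: dom_upset hB _; exact: up.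
case: (set_0Vmem (~: T)) => [e0 | [b bT]].
  apply: IH => //; by rewrite e0 cards0.

have lt : (#|~: (b |: T)| < #|~: T|)%N.
  apply: proper_card; apply/properP; split.
    by rewrite setCS subsetUr.
  exists b => //; by rewrite in_setC in_setU1 eqxx.
apply: (@le_trans _ _ (\sum_(x | compT (b |: T) x \in ustar b U) mu x)).
  have bT' : b \notin T by rewrite -in_setC.
  apply: sum_le_sub => // x xU px; apply: step_pw => //.
  move=> a a' paa ya ya'; exact: (lift x px a a' paa ya ya').
have cT' : (#|~: (b |: T)| <= n)%N by rewrite -ltnS (leq_trans lt cT).
apply: (le_trans (IH (b |: T) cT' (ustar b U) (ustar_up up))).
apply: rho_step => // a H pab; exact: hA.
Qed.

End Main.

Theorem proposition2p13 (R : realType) (N : nat) (A B : finType)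
  (pi : A -> B) (s : B -> A) (mu rho : {ffun config N A -> R}) :
  (0 < N)%N ->
  (0 < #|A|)%N -> (0 < #|B|)%N ->
  (forall b : B, exists a : A, pi a = b) ->
  (forall b : B, pi (s b) = b) ->
  is_prob mu -> is_prob rho ->
  is_pi_lift pi mu ->
  (* (A) *)
  (forall (b : B) (a : A) (H : {pred config N A}),
      pi a = b -> measurable_outside pi b H -> 0 < prob_of rho H ->
      stoch_dom (@le_ord N)
        (cond_law rho H (fun z : config N A => z (s b)))
        (cond_law rho H (fun z : config N A => z a))) ->
  (* (B) *)
  stoch_dom (@le_config N A) (pushforward mu (compress pi s)) rho ->
  stoch_dom (@le_config N A) mu rho.
Proof.
move=> _ _ _ _ spi [mu0 mu1] [rho0 rho1] lift hA hB.
apply: hall_thm => //; first by rewrite mu1 rho1.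
move=> S.
have upN : upset_c (nbh (@le_config N A) S).
  move=> x y lxy; rewrite !inE => /existsP[z /andP[zS lzx]].
  by apply/existsP; exists z; rewrite zS (le_config_trans lzx lxy).
apply: (@le_trans _ _ (\sum_(x in nbh (@le_config N A) S) mu x)).
  apply: sum_subset_le => //; apply/subsetP => x xS; rewrite inE.
  by apply/existsP; exists x; rewrite xS le_config_refl.
have := chain spi mu0 rho0 lift hA hB (leqnn #|~: (set0 : {set B})|) upN.
by under eq_bigl do rewrite compT_set0.
Qed.
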